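(* Let $P,Q\subseteq\mathbb R^n$ be nonzero polyhedral cones. Consider the following cutting-plane iteration (run without stopping): choose $u^1\in P\cap S_n$ and $v^1\in\mathtt{Proj}_{Q\cap S_n}(u^1)$; for $k=1,2,\dots$, let $(u^{k+1},r^{k+1})$ be a global solution of $$\min_{(u,r)\in\mathbb R^{n+1}} r\quad\text{s.t.}\quad u\in P,\ \|u\|^2=1,\ \langle v^j,u\rangle\le r\ (j=1,\dots,k),$$ and let $v^{k+1}\in\mathtt{Proj}_{Q\cap S_n}(u^{k+1})$. Then every cluster point $\bar u$ of $\{u^k\}$ is a global solution of $\min_{u\in P\cap S_n}F_Q(u)$; for any $\bar v\in\mathtt{Proj}_{Q\cap S_n}(\bar u)$, the pair $(\bar u,\bar v)$ solves the max-min problem defining $\Theta(P,Q)$ (i.e. $\bar u$ attains the outer maximum, $\bar v$ attains the inner minimum for $\bar u$, and $\arccos\langle\bar u,\bar v\rangle=\Theta(P,Q)$); and $\lim_k r^k=\cos\Theta(P,Q)$.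
   Context: $S_n$ is the unit sphere of $\mathbb R^n$. A polyhedral cone is a finitely generated cone $\{Gx:x\ge0\}$. $\mathtt{Proj}_X(u):=\arg\min_{x\in X}\|x-u\|$. $F_Q(u):=\max_{v\in Q\cap S_n}\langle u,v\rangle$ and $\Theta(P,Q):=\max_{u\in P\cap S_n}\min_{v\in Q\cap S_n}\arccos\langle u,v\rangle$ (so $\cos\Theta(P,Q)=\min_{u\in P\cap S_n}F_Q(u)$). *)

(* Defs.v *)
From HB Require Import structures.
From mathcomp Require Import all_boot all_order all_algebra.
From mathcomp Require Import all_classical all_reals all_analysis.
Set Implicit Arguments. Unset Strict Implicit. Unset Printing Implicit Defensive.
Import Order.TTheory GRing.Theory Num.Theory.
Local Open Scope classical_set_scope.
Local Open Scope ring_scope.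

Section Defs.
Variables (R : realType) (n : nat).

Definition dotv (u v : 'cV[R]_n) : R := \sum_(i < n) u i 0 * v i 0.
Definition vnorm (u : 'cV[R]_n) : R := Num.sqrt (dotv u u).

Definition sphere : set 'cV[R]_n := [set u | vnorm u = 1].

Definition polyhedral_cone (P : set 'cV[R]_n) : Prop :=
  exists (m : nat) (G : 'M[R]_(n, m)),
    P = [set G *m x | x in [set x : 'cV[R]_m | forall i, 0 <= x i 0]].

Definition isProj (X : set 'cV[R]_n) (u x : 'cV[R]_n) : Prop :=
  X x /\ forall y, X y -> vnorm (x - u) <= vnorm (y - u).

Definition FQ (Q : set 'cV[R]_n) (u : 'cV[R]_n) : R :=
  sup [set dotv u v | v in Q `&` sphere].

Definition inner_angle (Q : set 'cV[R]_n) (u : 'cV[R]_n) : R :=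
  inf [set acos (dotv u v) | v in Q `&` sphere].

Definition Theta (P Q : set 'cV[R]_n) : R :=
  sup [set inner_angle Q u | u in P `&` sphere].

Definition cluster_point (uk : nat -> 'cV[R]_n) (ub : 'cV[R]_n) : Prop :=
  forall (e : R) (N : nat), 0 < e -> exists k, (N <= k)%N /\ vnorm (uk k - ub) < e.

(* feasible set of the subproblem at step k (cuts j = 0..k, i.e. the paper's
   j = 1..k shifted by one) *)
Definition cp_feasible (P : set 'cV[R]_n) (vk : nat -> 'cV[R]_n) (k : nat)
  (u : 'cV[R]_n) (r : R) : Prop :=
  P u /\ vnorm u ^+ 2 = 1 /\ forall j, (j <= k)%N -> dotv (vk j) u <= r.

Definition cp_solution (P : set 'cV[R]_n) (vk : nat -> 'cV[R]_n) (k : nat)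
  (u : 'cV[R]_n) (r : R) : Prop :=
  cp_feasible P vk k u r /\
  forall u' r', cp_feasible P vk k u' r' -> r <= r'.

End Defs.
Arguments sphere {R n}.

(* Main.v *)
Require Import Defs.
From HB Require Import structures.
From mathcomp Require Import all_boot all_order all_algebra.
From mathcomp Require Import all_classical all_reals all_analysis.
From mathcomp Require Import ring lra zify.
Import Order.TTheory GRing.Theory Num.Theory numFieldNormedType.Exports.
Local Open Scope classical_set_scope.
Local Open Scope ring_scope.
Set Implicit Arguments. Unset Strict Implicit. Unset Printing Implicit Defensive.


Section Dot.
Variables (R : realType) (n : nat).
Implicit Types (a b u v w : 'cV[R]_n).

Lemma dotvC a b : dotv a b = dotv b a.
Proof. by apply: eq_bigr => i _; rewrite mulrC. Qed.

Lemma dotvBr w a b : dotv w (a - b) = dotv w a - dotv w b.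
Proof. by rewrite /dotv -sumrB; apply: eq_bigr => i _; rewrite !mxE mulrBr. Qed.

Lemma dotvNl a b : dotv (- a) b = - dotv a b.
Proof. by rewrite /dotv -sumrN; apply: eq_bigr => i _; rewrite !mxE mulNr. Qed.

Lemma dotvNr a b : dotv a (- b) = - dotv a b.
Proof. by rewrite dotvC dotvNl dotvC. Qed.

Lemma dotv_sq a b : dotv (a - b) (a - b) = dotv a a + dotv b b - (dotv a b) *+ 2.
Proof.
rewrite /dotv -sumrMnl -big_split -sumrB /=; apply: eq_bigr => i _; rewrite !mxE.
by rewrite mulr2n; ring.
Qed.

Lemma dotv_ge0 a : 0 <= dotv a a.
Proof. by apply: sumr_ge0 => i _; rewrite -expr2 sqr_ge0. Qed.

Lemma two_dot a b : (dotv a b) *+ 2 <= dotv a a + dotv b b.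
Proof. by rewrite -subr_ge0 -dotv_sq dotv_ge0. Qed.

Lemma coord_le a i : (a i 0) ^+ 2 <= dotv a a.
Proof.
rewrite /dotv (bigD1 i) //= -expr2 lerDl; apply: sumr_ge0 => j _.
by rewrite -expr2 sqr_ge0.
Qed.

Lemma vnorm1E u : vnorm u = 1 <-> dotv u u = 1.
Proof.
rewrite /vnorm; split => [h|->]; last exact: sqrtr1.
by rewrite -(sqr_sqrtr (dotv_ge0 u)) h expr1n.
Qed.

Lemma vnorm_ge0 a : 0 <= vnorm a.
Proof. exact: sqrtr_ge0. Qed.

Lemma coord_vnorm a i : `|a i 0| <= vnorm a.
Proof. by rewrite -sqrtr_sqr /vnorm ler_sqrt ?dotv_ge0 ?coord_le. Qed.

Lemma unit_coord u i : dotv u u = 1 -> `|u i 0| <= 1.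
Proof. by move=> h; have := coord_vnorm u i; rewrite /vnorm h sqrtr1. Qed.

Lemma unit_dot u v : dotv u u = 1 -> dotv v v = 1 -> -1 <= dotv u v <= 1.
Proof.
move=> hu hv; have h1 := two_dot u v; have h2 := two_dot (- u) v.
rewrite !dotvNl !dotvNr opprK hu hv in h2.
rewrite hu hv in h1.
move: h1 h2; rewrite !mulr2n => h1 h2.
apply/andP; split; lra.
Qed.

Lemma dot_close w a b e : (forall i, `|w i 0| <= 1) ->
  (forall i, `|a i 0 - b i 0| <= e) -> `|dotv w a - dotv w b| <= n%:R * e.
Proof.
move=> hw hab; rewrite -dotvBr /dotv.
apply: le_trans (ler_norm_sum _ _ _) _.
have -> : n%:R * e = \sum_(i < n) e by rewrite sumr_const card_ord mulr_natl.
apply: ler_sum => i _; rewrite !mxE normrM.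
rewrite -[e]mul1r; apply: ler_pM => //; exact: le_trans (normr_ge0 _) (hab i).
Qed.

End Dot.


Section Real.
Variable R : realType.

Lemma inv_small (e : R) : 0 < e -> exists N : nat, forall k, (N <= k)%N -> (k.+1%:R)^-1 < e.
Proof.
move=> e0; exists (Num.bound e^-1) => k hk.
rewrite -(invrK e) ltf_pV2 ?posrE ?invr_gt0 //.
apply: lt_le_trans (archi_boundP _) _; first by rewrite invr_ge0 ltW.
by rewrite ler_nat; apply: leq_trans hk _.
Qed.

Lemma le_eps (a b : R) : (forall e, 0 < e -> a <= b + e) -> a <= b.
Proof. by move/ler_addgt0Pr. Qed.

Lemma eq0_eps (a : R) : (forall e, 0 < e -> `|a| <= e) -> a = 0.
Proof.
move=> h; apply/eqP; rewrite -normr_le0; apply: le_eps => e /h; by rewrite add0r.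
Qed.

End Real.


Section Cone.
Variable R : realType.

Definition suppI m (I : {set 'I_m}) (x : 'cV[R]_m) :=
  (forall i, 0 <= x i 0) /\ (forall i, i \notin I -> x i 0 = 0).

Definition coneI p m (G : 'M[R]_(p, m)) I := [set G *m x | x in suppI I].

Lemma cone_reduce p m (G : 'M[R]_(p, m)) I (z : 'cV[R]_m) y :
  suppI I z -> z != 0 -> G *m z = 0 -> coneI G I y ->
  exists i, i \in I /\ coneI G (I :\ i) y.
Proof.
move=> [z0 zI] zn0 Gz [x [x0 xI] <-].
have [j0 zj0] : exists j, 0 < z j 0.
  apply/not_existsP => h; move/eqP: zn0; apply; apply/matrixP => i j.
  rewrite (ord1 j) mxE; apply/eqP; rewrite eq_le z0 andbT leNgt; apply/negP.
  by move=> hz; apply: (h i).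
case: (@arg_minP _ _ _ j0 (fun j => 0 < z j 0) (fun j => x j 0 / z j 0) zj0) => i zi imin.
have iI : i \in I by apply/negPn/negP => /zI hz; move: zi; rewrite hz ltxx.
exists i; split => //.
pose t := x i 0 / z i 0.
exists (x - t *: z); last by rewrite mulmxBr -scalemxAr Gz scaler0 subr0.
split => j; rewrite !mxE.
  have [zj|] := ltP 0 (z j 0).
    rewrite subr_ge0 -ler_pdivlMr //; exact: imin.
  move=> zj; have -> : z j 0 = 0 by apply/eqP; rewrite eq_le zj z0.
  by rewrite mulr0 subr0.
rewrite in_setD1 negb_and negbK => /orP[/eqP ->|jI].
  by rewrite /t divfK ?subrr // gt_eqF.
by rewrite (xI _ jI) (zI _ jI) mulr0 subr0.
Qed.


Definition close p (e : R) (x y : 'cV[R]_p) := forall i, `|x i 0 - y i 0| < e.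
Definition closedC p (A : set 'cV[R]_p) :=
  forall y, (forall e, 0 < e -> exists z, A z /\ close e z y) -> A y.

Lemma BW p (M : R) (u : nat -> 'cV[R]_p) :
  (forall k i, `|u k i 0| <= M) ->
  exists y : 'cV[R]_p, forall e, 0 < e -> forall N, exists k, (N <= k)%N /\
    close e (u k) y.
Proof.
move=> uM.
have K := @rV_compact R p (fun _ => `[(- M), M]%classic) (fun _ => @segment_compact R _ _).
pose w k := (u k)^T.
have Fw : (fmap w \oo) [set v : 'rV[R]_p | forall i, `[(- M), M]%classic (v ord0 i)].
  exists 0%N => // k _ i /=. rewrite mxE /= in_itv /= -ler_norml. exact: uM.
have [q [_ cq]] := K (fmap w \oo) _ Fw.
exists q^T => e e0 N.
have F1 : (fmap w \oo) [set w k | k in [set k | (N <= k)%N]].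
  exists N => //. move=> k /= kN. by exists k.
have := cq [set w k | k in [set k | (N <= k)%N]] (ball q e) F1 (nbhsx_ballx _ _ e0).
case=> _ [[k kN <-] [_ /= bq]]; exists k; split => // i.
have := bq ord0 i. rewrite !mxE /ball /= => h. by rewrite distrC.
Qed.

Lemma approx_seq p (A : set 'cV[R]_p) y :
  (forall e, 0 < e -> exists z, A z /\ close e z y) ->
  exists u : nat -> 'cV[R]_p, forall k, A (u k) /\ close (k.+1%:R^-1) (u k) y.
Proof.
move=> h; have hk : forall k : nat, 0 < (k.+1%:R : R)^-1 by move=> k; rewrite invr_gt0 ltr0Sn.
have [f hf] := @choice _ _ (fun k z => A z /\ close (k.+1%:R^-1) z y) (fun k => h _ (hk k)).
by exists f.
Qed.

Lemma choiceP (X Y : Type) (P : X -> Y -> Prop) :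
  (forall x, exists y, P x y) -> exists f, forall x, P x (f x).
Proof. by move=> /choice [f hf]; exists f. Qed.

Lemma closedC_suppI m I : closedC (@suppI m I).
Proof.
move=> y h; split => i.
  rewrite -oppr_le0; apply: le_eps => e /h [z [[z0 _] /(_ i) hz]].
  rewrite add0r; move: hz (z0 i); rewrite ltr_norml => /andP[h1 h2] h3; lra.
move=> iI; apply: eq0_eps => e /h [z [[_ zI] /(_ i) hz]].
by move: hz; rewrite zI // sub0r normrN => /ltW.
Qed.

Lemma lin_bound p m (G : 'M[R]_(p, m)) : exists C : R, 0 < C /\
  forall (w : 'cV[R]_m) (e : R), 0 <= e -> (forall i, `|w i 0| <= e) -> forall j, `|(G *m w) j 0| <= C * e.
Proof.
exists (1 + \sum_j \sum_i `|G j i|); split.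
  by apply: lt_le_trans (ltr01) _; rewrite lerDl; apply: sumr_ge0 => j _; apply: sumr_ge0.
move=> w e e0 hw j; rewrite mxE; apply: le_trans (ler_norm_sum _ _ _) _.
apply: le_trans (_ : \sum_i `|G j i| * e <= _).
  by apply: ler_sum => i _; rewrite normrM ler_wpM2l.
rewrite -mulr_suml ler_wpM2r //.
apply: le_trans (_ : \sum_j \sum_i `|G j i| <= _); last by rewrite lerDr.
rewrite (bigD1 j) //= lerDl; apply: sumr_ge0 => k _; apply: sumr_ge0 => i _; exact: normr_ge0.
Qed.

Lemma sum_close m (z y : 'cV[R]_m) e : close e z y ->
  `|\sum_i z i 0 - \sum_i y i 0| <= m%:R * e.
Proof.
move=> h; rewrite -sumrB; apply: le_trans (ler_norm_sum _ _ _) _.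
have -> : m%:R * e = \sum_(i < m) e by rewrite sumr_const card_ord mulr_natl.
by apply: ler_sum => i _; apply/ltW.
Qed.

Lemma coord_le_sum m I (x : 'cV[R]_m) i : suppI I x -> `|x i 0| <= \sum_j x j 0.
Proof.
move=> [x0 _]; rewrite ger0_norm // (bigD1 i) //= lerDl.
by apply: sumr_ge0.
Qed.

Lemma subE p q (A B : 'M[R]_(p, q)) i j : (A - B) i j = A i j - B i j.
Proof. by rewrite !mxE. Qed.

Lemma matrix_eps p m (G : 'M[R]_(p, m)) (z : 'cV[R]_m) (xs : nat -> 'cV[R]_m) (y : 'cV[R]_p) :
  (forall e, 0 < e -> forall N, exists k, (N <= k)%N /\ close e (xs k) z) ->
  (forall k j, `|(G *m xs k) j 0 - y j 0| <= k.+1%:R^-1) ->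
  G *m z = y.
Proof.
move=> hz hx; have [C [C0 hC]] := lin_bound G.
have ltr02 : (0:R) < 2 by lra.
apply/matrixP => j j'; rewrite (ord1 j'); apply/eqP; rewrite -subr_eq0; apply/eqP.
apply: eq0_eps => e e0.
have [N hN] := inv_small (divr_gt0 e0 ltr02).
have [k [kN hk]] := hz (e / 2 / C) (divr_gt0 (divr_gt0 e0 ltr02) C0) N.
have h1 := hC (z - xs k) (e / 2 / C) (ltW (divr_gt0 (divr_gt0 e0 ltr02) C0)).
have h2 : `|(G *m (z - xs k)) j 0| <= C * (e / 2 / C).
  by apply: h1 => i; rewrite !mxE distrC; apply/ltW.
rewrite mulrC divfK ?gt_eqF // in h2.
have h3 := hx k j; have h4 := hN k kN.
rewrite mulmxBr subE in h2.
have -> : (G *m z) j 0 - y j 0 = ((G *m z) j 0 - (G *m xs k) j 0) + ((G *m xs k) j 0 - y j 0) by ring.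
apply: le_trans (ler_normD _ _) _.
have he : e = e / 2 + e / 2 by field.
apply: le_trans (lerD h2 h3) _; rewrite [leRHS]he lerD2l; exact: ltW.
Qed.


Lemma suppI_scale m I (x : 'cV[R]_m) c : 0 <= c -> suppI I x -> suppI I (c *: x).
Proof.
move=> c0 [x0 xI]; split => i; rewrite mxE; first exact: mulr_ge0.
by move=> /xI ->; rewrite mulr0.
Qed.

Lemma kernel_bound p m (G : 'M[R]_(p, m)) I :
  ~ (exists z, suppI I z /\ z != 0 /\ G *m z = 0) ->
  exists d : R, 0 < d /\ forall x, suppI I x -> \sum_i x i 0 = 1 ->
    exists j, d <= `|(G *m x) j 0|.
Proof.
move=> nk; apply: contrapT => H; apply: nk.
have hk : forall k : nat, exists x, suppI I x /\ \sum_i x i 0 = 1 /\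
    forall j, `|(G *m x) j 0| < k.+1%:R^-1.
  move=> k; apply: contrapT => hk; apply: H; exists k.+1%:R^-1; split.
    by rewrite invr_gt0 ltr0Sn.
  move=> x hx hs; apply: contrapT => hj; apply: hk; exists x; split => //; split => // j.
  rewrite ltNge; apply/negP => hle; apply: hj; by exists j.
have [xs hxs] := choiceP hk.
have hb : forall k i, `|xs k i 0| <= 1.
  by move=> k i; rewrite -(hxs k).2.1; exact: coord_le_sum (hxs k).1.
have [z hz] := BW hb.
exists z.
have zs : suppI I z.
  apply: closedC_suppI => e e0; have [k [_ hk']] := hz e e0 0%N.
  by exists (xs k); split => //; exact: (hxs k).1.
have zsum : \sum_i z i 0 = 1.
  apply/eqP; rewrite -subr_eq0; apply/eqP; apply: eq0_eps => e e0.
  have [k [_ hk']] := hz (e / (m.+1%:R)) (divr_gt0 e0 (ltr0Sn _ _)) 0%N.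
  have := sum_close hk'; rewrite (hxs k).2.1 distrC => h.
  apply: le_trans h _.
  have hm : (m%:R / m.+1%:R <= 1 :> R) by rewrite ler_pdivrMr ?ltr0Sn // mul1r ler_nat.
  have -> : m%:R * (e / m.+1%:R) = e * (m%:R / m.+1%:R) by rewrite mulrCA.
  by rewrite ger_pMr.
have Gz : G *m z = 0.
  apply: (matrix_eps hz) => k j; rewrite [X in _ - X]mxE subr0; exact: ltW ((hxs k).2.2 j).
split=> //; split => //.
apply/eqP => z0; move: zsum; rewrite z0 big1 => [|i _]; last by rewrite mxE.
by move/eqP; rewrite eq_sym oner_eq0.
Qed.

Lemma cone_closed_nokernel p m (G : 'M[R]_(p, m)) I :
  ~ (exists z, suppI I z /\ z != 0 /\ G *m z = 0) -> closedC (coneI G I).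
Proof.
move=> nk; have [d [d0 hd]] := kernel_bound nk.
move=> y /approx_seq [us hus].
have hx : forall k, exists x, suppI I x /\ G *m x = us k.
  by move=> k; have [[x hx <-] _] := hus k; exists x.
have [xs hxs] := choiceP hx.
pose Y := \sum_j `|y j 0| + 1.
have Y0 : 0 < Y by apply: lt_le_trans (ltr01) _; rewrite /Y lerDr sumr_ge0.
have hGx : forall k j, `|(G *m xs k) j 0| <= Y.
  move=> k j; rewrite (hxs k).2.
  have hc := (hus k).2 j.
  have hy : `|y j 0| <= \sum_j `|y j 0| by rewrite (bigD1 j) //= lerDl sumr_ge0.
  have hinv : (k.+1%:R^-1 : R) <= 1 by rewrite invf_le1 ?ler1n ?ltr0Sn.
  have := ler_normD (us k j 0 - y j 0) (y j 0); rewrite subrK => h.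
  apply: le_trans h _; rewrite /Y [leRHS]addrC lerD //.
  exact: le_trans (ltW hc) hinv.
have hs : forall k, \sum_i xs k i 0 <= Y / d.
  move=> k; set s := \sum_i xs k i 0.
  have s0 : 0 <= s by apply: sumr_ge0 => i _; exact: (hxs k).1.1 i.
  have [->|sp] := eqVneq s 0; first by rewrite divr_ge0 // ltW.
  have spos : 0 < s by rewrite lt_neqAle eq_sym sp s0.
  have ispos : 0 <= s^-1 by rewrite invr_ge0 ltW.
  have ssum : \sum_i (s^-1 *: xs k) i 0 = 1.
    under eq_bigr do rewrite mxE.
    by rewrite -mulr_sumr mulVf.
  have [j hj] := hd (s^-1 *: xs k) (suppI_scale ispos (hxs k).1) ssum.
  rewrite -scalemxAr mxE normrM ger0_norm // in hj.
  rewrite ler_pdivlMr //.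
  have := ler_wpM2l s0 hj; rewrite mulrA mulfV // mul1r => h.
  exact: le_trans h (hGx k j).
have hb : forall k i, `|xs k i 0| <= Y / d.
  by move=> k i; apply: le_trans (coord_le_sum i (hxs k).1) (hs k).
have [x hx'] := BW hb.
exists x.
  apply: closedC_suppI => e e0; have [k [_ hk]] := hx' e e0 0%N.
  by exists (xs k); split=> //; exact: (hxs k).1.
apply: (matrix_eps hx') => k j; rewrite (hxs k).2; exact: ltW ((hus k).2 j).
Qed.

Lemma pigeon m (Q : 'I_m -> R -> Prop) :
  (forall e, 0 < e -> exists i, Q i e) ->
  (forall i e e', 0 < e -> e <= e' -> Q i e -> Q i e') ->
  exists i, forall e, 0 < e -> Q i e.
Proof.
move=> h mono; apply: contrapT => H.
have : forall i, exists e, 0 < e /\ ~ Q i e.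
  move=> i; apply: contrapT => Hi; apply: H; exists i => e e0.
  apply: contrapT => nq; apply: Hi; by exists e.
move=> /choiceP [f hf].
pose e := \big[Order.min/1]_i f i.
have e0 : 0 < e.
  apply: (big_ind (fun x => 0 < x)) => // [a b a0 b0|i _].
    by rewrite lt_min a0 b0.
  exact: (hf i).1.
have [i hi] := h e e0.
apply: (hf i).2; apply: mono hi => //.
by rewrite /e (bigD1 i) //= ge_min lexx.
Qed.

Lemma coneI_closed p m (G : 'M[R]_(p, m)) I : closedC (coneI G I).
Proof.
suff : forall k (I : {set 'I_m}), (#|I| < k)%N -> closedC (coneI G I) by move=> /(_ #|I|.+1 I); apply.
elim=> [//|k IH] {}I hI.
have [[z [zs [zn Gz]]]|nk] := pselect (exists z, suppI I z /\ z != 0 /\ G *m z = 0); last first.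
  exact: cone_closed_nokernel.
move=> y hy.
pose Q i e := i \in I /\ exists w, coneI G (I :\ i) w /\ close e w y.
have h1 : forall e, 0 < e -> exists i, Q i e.
  move=> e e0; have [w [cw hw]] := hy e e0.
  have [i [iI ci]] := cone_reduce zs zn Gz cw.
  by exists i; split => //; exists w.
have h2 : forall i e e', 0 < e -> e <= e' -> Q i e -> Q i e'.
  move=> i e e' _ le [iI [w [cw hw]]]; split => //; exists w; split => // j.
  exact: lt_le_trans (hw j) le.
have [i hi] := pigeon h1 h2.
have iI : i \in I by have [] := hi 1 ltr01.
have ci : coneI G (I :\ i) y.
  apply: (IH (I :\ i)).
    by move: hI; rewrite (cardsD1 i I) iI add1n ltnS.
  by move=> e e0; have [_ [w hw]] := hi e e0; exists w.
case: ci => x [x0 xI] <-; exists x => //; split => // j jI; apply: xI.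
by rewrite in_setD1 negb_and jI orbT.
Qed.

Lemma poly_closed p (P : set 'cV[R]_p) : polyhedral_cone P -> closedC P.
Proof.
move=> [m [G ->]] y hy.
have : coneI G (finset (fun _ : 'I_m => true)) y.
  apply: coneI_closed => e e0; have [z [[x hx <-] hz]] := hy e e0.
  exists (G *m x); split => //; exists x => //; split => // i; by rewrite inE.
by case=> x [x0 _] <-; exists x.
Qed.
End Cone.


Section Gen.
Variable R : realType.

Lemma sup_max (E : set R) x : E x -> (forall y, E y -> y <= x) -> sup E = x.
Proof.
move=> Ex hx; apply/eqP; rewrite eq_le; apply/andP; split.
  by apply: ge_sup; [exists x | move=> y /hx].
by apply: ub_le_sup => //; exists x => y /hx.
Qed.

Lemma inf_min (E : set R) x : E x -> (forall y, E y -> x <= y) -> inf E = x.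
Proof.
move=> Ex hx; apply/eqP; rewrite eq_le; apply/andP; split.
  by apply: ge_inf => //; exists x => y /hx.
by apply: lb_le_inf; [exists x | move=> y /hx].
Qed.

Lemma acos_anti (a b : R) : -1 <= a -> a <= b -> b <= 1 -> acos b <= acos a.
Proof.
move=> a1 ab b1; rewrite leNgt; apply/negP => h.
have ha : -1 <= a <= 1 by rewrite a1 /=; apply: le_trans ab b1.
have hb : -1 <= b <= 1 by rewrite b1 andbT; apply: le_trans a1 ab.
have := h; rewrite -ltr_cos ?acosK ?in_itv //=.
- by rewrite ltNge ab.
- by rewrite acos_ge0 // acos_lepi.
- by rewrite acos_ge0 // acos_lepi.
Qed.


Lemma small_mul (c e : R) : 0 <= c -> 0 < e -> exists e', 0 < e' /\ c * e' <= e.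
Proof.
move=> c0 e0; exists (e / (c + 1)); split.
  by apply: divr_gt0 => //; apply: lt_le_trans ltr01 _; rewrite lerDr.
have c1 : 0 < c + 1 by apply: lt_le_trans ltr01 _; rewrite lerDr.
by rewrite mulrCA ger_pMr // ler_pdivrMr // mul1r lerDl.
Qed.

End Gen.

Section Main.
Variables (R : realType) (n : nat).
Implicit Types (u v w : 'cV[R]_n) (Q : set 'cV[R]_n).

Lemma sphereE u : sphere u <-> dotv u u = 1.
Proof. exact: vnorm1E. Qed.

Lemma unit_coords u : sphere u -> forall i, `|u i 0| <= 1.
Proof. by move=> /sphereE h i; apply: unit_coord. Qed.

Lemma cluster_coord (uk : nat -> 'cV[R]_n) ub : cluster_point uk ub ->
  forall e, 0 < e -> forall N, exists k, (N <= k)%N /\ close e (uk k) ub.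
Proof.
move=> h e e0 N; have [k [kN hk]] := h e N e0; exists k; split => // i.
by rewrite -subE; exact: le_lt_trans (coord_vnorm _ i) hk.
Qed.

Lemma closedI (A B : set 'cV[R]_n) : closedC A -> closedC B -> closedC (A `&` B).
Proof.
move=> hA hB y hy; split; [apply: hA | apply: hB] => e /hy [z [[zA zB] hz]];
  by exists z.
Qed.

Lemma closed_sphere : closedC (@sphere R n).
Proof.
move=> y hy.
have yc : forall i, `|y i 0| <= 1.
  move=> i; apply: le_eps => e e0; have [z [zs hz]] := hy e e0.
  have -> : y i 0 = z i 0 - (z i 0 - y i 0) by ring.
  apply: le_trans (ler_normB _ _) _; apply: lerD; first exact: unit_coords.
  exact: ltW.
apply/sphereE; apply/eqP; rewrite -subr_eq0; apply/eqP; apply: eq0_eps => e e0.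
have [e' [e'0 he']] := @small_mul R (n%:R *+ 2) e (mulrn_wge0 _ (ler0n _ _)) e0.
have [z [zs hz]] := hy e' e'0.
have hzy : forall i, `|y i 0 - z i 0| <= e' by move=> i; rewrite distrC; exact: ltW.
have h1 := dot_close yc hzy.
have h2 := dot_close (unit_coords zs) hzy.
rewrite (sphereE z).1 // in h2.
have -> : dotv y y - 1 = (dotv y y - dotv y z) + (dotv z y - 1) by rewrite (dotvC z y); ring.
apply: le_trans (ler_normD _ _) _; apply: le_trans he'.
by rewrite mulr2n mulrDl lerD.
Qed.

Lemma proj_max Q u v : dotv u u = 1 -> isProj (Q `&` sphere) u v ->
  forall w, (Q `&` sphere) w -> dotv u w <= dotv u v.
Proof.
move=> hu [[_ vs] hv] w [wQ ws]; have := hv w (conj wQ ws).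
rewrite /vnorm ler_sqrt ?dotv_ge0 // !dotv_sq hu (sphereE _).1 // (sphereE w).1 //.
rewrite (dotvC v u) (dotvC w u) !mulr2n => h; lra.
Qed.

Lemma maximizer Q u : closedC Q -> sphere u -> (exists v, (Q `&` sphere) v) ->
  exists v, (Q `&` sphere) v /\ forall w, (Q `&` sphere) w -> dotv u w <= dotv u v.
Proof.
move=> hQ us [v0 v0s].
pose E := [set dotv u v | v in Q `&` sphere].
have hE : has_sup E.
  split; first by exists (dotv u v0); exists v0.
  exists 1 => _ [w ws <-].
  by have /andP[] := unit_dot ((sphereE u).1 us) ((sphereE w).1 ws.2).
have hk : forall k : nat, exists v, (Q `&` sphere) v /\ sup E - k.+1%:R^-1 < dotv u v.
  move=> k; have kp : 0 < (k.+1%:R : R)^-1 by rewrite invr_gt0 ltr0Sn.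
  have [_ [v vs <-] h] := sup_adherent kp hE.
  by exists v.
have [vs hvs] := choiceP hk.
have [vb hvb] := @BW R n 1 vs (fun k => unit_coords (hvs k).1.2).
have vbs : (Q `&` sphere) vb.
  apply: (closedI hQ closed_sphere) => e e0; have [k [_ hk']] := hvb e e0 0%N.
  by exists (vs k); split => //; exact: (hvs k).1.
exists vb; split => // w ws.
apply: le_trans (_ : sup E <= _).
  by apply: sup_upper_bound => //; exists w.
apply: le_eps => e e0.
have e20 : 0 < e / 2 by apply: divr_gt0 => //; lra.
have [e' [e'0 he']] := @small_mul R n%:R (e / 2) (ler0n _ _) e20.
have [N hN] := inv_small e20.
have [k [kN hk']] := hvb e' e'0 N.
have hc : forall i, `|vs k i 0 - vb i 0| <= e' by move=> i; exact: ltW.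
have h1 := dot_close (unit_coords us) hc.
have h2 := (hvs k).2.
have h3 := hN k kN.
have he : e = e / 2 + e / 2 by field.
move: h1; rewrite ler_norml => /andP[_ h1].
set a := sup E in h2 *; set b := dotv u (vs k) in h1 h2; set c := dotv u vb in h1 *.
set d := (k.+1%:R^-1 : R) in h2 h3; set f := e / 2 in he h3 he'.
set g := n%:R * e' in h1 he'.
lra.
Qed.

Lemma FQ_eq Q u v : (Q `&` sphere) v ->
  (forall w, (Q `&` sphere) w -> dotv u w <= dotv u v) -> FQ Q u = dotv u v.
Proof.
move=> vs hv; apply: sup_max; first by exists v.
by move=> _ [w ws <-]; exact: hv.
Qed.

Lemma inner_eq Q u v : sphere u -> (Q `&` sphere) v ->
  (forall w, (Q `&` sphere) w -> dotv u w <= dotv u v) ->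
  inner_angle Q u = acos (dotv u v).
Proof.
move=> us vs hv; apply: inf_min; first by exists v.
move=> _ [w ws <-].
have /andP[a1 _] := unit_dot ((sphereE u).1 us) ((sphereE w).1 ws.2).
have /andP[_ b1] := unit_dot ((sphereE u).1 us) ((sphereE v).1 vs.2).
exact: acos_anti a1 (hv w ws) b1.
Qed.

End Main.


Lemma lin4 (R : realType) (a b c d f eta r : R) : b <= r -> d <= a ->
  a - b <= f + f -> c - d <= f -> f + (f + (f + 0)) <= eta -> c - eta <= r.
Proof. move=> *; lra. Qed.

Unset Implicit Arguments.
Set Strict Implicit.

Theorem mainTheorem11 (R : realType) (n : nat) (P Q : set 'cV[R]_n)
  (uk vk : nat -> 'cV[R]_n) (rk : nat -> R) :
  polyhedral_cone P -> polyhedral_cone Q ->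
  P <> [set 0] -> Q <> [set 0] ->
  (P `&` sphere) (uk 0%N) ->
  (forall k, isProj (Q `&` sphere) (uk k) (vk k)) ->
  (forall k, cp_solution P vk k (uk k.+1) (rk k.+1)) ->
  (forall ub, cluster_point uk ub ->
     ((P `&` sphere) ub /\
      (forall u, (P `&` sphere) u -> FQ Q ub <= FQ Q u)) /\
     (forall vb, isProj (Q `&` sphere) ub vb ->
        ((P `&` sphere) ub /\
         (forall u, (P `&` sphere) u -> inner_angle Q u <= inner_angle Q ub)) /\
        ((Q `&` sphere) vb /\
         (forall v, (Q `&` sphere) v -> acos (dotv ub vb) <= acos (dotv ub v))) /\
        acos (dotv ub vb) = Theta P Q)) /\
  (rk @ \oo --> cos (Theta P Q)).
Proof.
move=> hP hQ _ _ u0 hproj hsol.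
rewrite /cp_solution /cp_feasible in hsol.
have cP := poly_closed hP; have cQ := poly_closed hQ.
have cPS : closedC (P `&` sphere) := closedI cP (@closed_sphere R n).
have uPS : forall k, (P `&` sphere) (uk k).
  case=> [//|k]; have [[uP [un _]] _] := hsol k; split => //; apply/sphereE.
  by rewrite -un /vnorm sqr_sqrtr // dotv_ge0.
have uunit k : dotv (uk k) (uk k) = 1 := (sphereE _).1 (uPS k).2.
have vQS k : (Q `&` sphere) (vk k) := (hproj k).1.
have vmax k : forall w, (Q `&` sphere) w -> dotv (uk k) w <= dotv (uk k) (vk k).
  exact: proj_max (uunit k) (hproj k).
have QSne : exists v, (Q `&` sphere) v by exists (vk 0%N).
have maxu : forall u, sphere u -> exists v, (Q `&` sphere) v /\
    forall w, (Q `&` sphere) w -> dotv u w <= dotv u v.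
  by move=> u us; exact: maximizer cQ us QSne.
have r_le : forall k u, (P `&` sphere) u -> rk k.+1 <= FQ Q u.
  move=> k u [uP us]; have [v [vs hv]] := maxu u us.
  rewrite (FQ_eq vs hv).
  apply: ((hsol k).2 u); split => //; split.
    by rewrite /vnorm sqr_sqrtr ?dotv_ge0 // (sphereE u).1.
  by move=> j _; rewrite dotvC; exact: hv _ (vQS j).
have r_ge : forall k j, (j <= k)%N -> dotv (vk j) (uk k.+1) <= rk k.+1.
  by move=> k j hj; exact: (hsol k).1.2.2 j hj.
have r_mono : forall k d, rk k.+1 <= rk (d + k).+1.
  move=> k; elim=> [//|d IH]; apply: le_trans IH _.
  apply: ((hsol (d + k)%N).2 (uk (d + k).+2)); have [[a [b c]] _] := hsol (d + k).+1.
  by split => //; split => // j hj; apply: c; exact: leqW.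
have key : forall ub,
    (forall e, 0 < e -> forall N, exists k, (N <= k)%N /\ close e (uk k) ub) ->
    (P `&` sphere) ub /\ (forall u, (P `&` sphere) u -> FQ Q ub <= FQ Q u) /\
    (forall eta, 0 < eta -> exists N, forall k, (N <= k)%N -> FQ Q ub - eta <= rk k).
  move=> ub hub.
  have ubPS : (P `&` sphere) ub.
    by apply: cPS => e e0; have [k [_ hk]] := hub e e0 0%N; exists (uk k).
  have [vh [vhs hvh]] := maxu ub ubPS.2.
  have lower : forall eta N, 0 < eta -> exists k2, (N <= k2)%N /\ (0 < k2)%N /\
      FQ Q ub - eta <= rk k2.
    move=> eta N eta0.
    have [e [e0 he]] := @small_mul R (n%:R *+ 3) eta (mulrn_wge0 _ (ler0n _ _)) eta0.
    have [k1 [k1N hk1]] := hub e e0 N.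
    have [k2 [k2N hk2]] := hub e e0 k1.+1.
    exists k2; split; first exact: leq_trans k1N (leq_trans (leqnSn _) k2N).
    split; first exact: leq_trans _ k2N.
    case: k2 k2N hk2 => [//|k] k2N hk2.
    have h1 := r_ge k k1 k2N.
    have hc : forall i, `|uk k1 i 0 - uk k.+1 i 0| <= e *+ 2.
      move=> i; have := hk1 i; have := hk2 i.
      have -> : uk k1 i 0 - uk k.+1 i 0 = (uk k1 i 0 - ub i 0) - (uk k.+1 i 0 - ub i 0) by ring.
      move=> a b; apply: le_trans (ler_normB _ _) _; rewrite mulr2n; apply: lerD; exact: ltW.
    have hc' : forall i, `|ub i 0 - uk k1 i 0| <= e by move=> i; rewrite distrC; exact: ltW.
    have h2 := dot_close (unit_coords (vQS k1).2) hc.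
    have h3 := dot_close (unit_coords vhs.2) hc'.
    have h4 := vmax k1 vh vhs.
    rewrite (FQ_eq vhs hvh).
    rewrite (dotvC vh ub) (dotvC vh (uk k1)) in h3.
    rewrite (dotvC (vk k1) (uk k1)) in h2.
    move: h2 h3; rewrite !ler_norml => /andP[_ h2] /andP[_ h3].
    move: he; rewrite mulrnAl !mulrS mulr0n => he.
    rewrite mulrnAr mulr2n in h2.
    set a := dotv (uk k1) (vk k1) in h2 h4; set b := dotv (vk k1) (uk k.+1) in h1 h2.
    set c := dotv ub vh in h3 *; set d := dotv (uk k1) vh in h3 h4.
    set f := n%:R * e in h2 h3 he.
    exact: lin4 h1 h4 h2 h3 he.
  split => //; split.
    move=> u uPSu; apply: le_eps => eta eta0; have [k2 [_ [k2p h]]] := lower eta 0%N eta0.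
    case: k2 k2p h => [//|k] _ h; have := r_le k u uPSu; lra.
  move=> eta eta0; have [k2 [_ [k2p h]]] := lower eta 0%N eta0; exists k2 => k hk.
  apply: le_trans h _.
  case: k2 k2p hk => [//|k2] _ hk.
  have -> : k = ((k - k2.+1) + k2).+1 by lia.
  exact: r_mono.
have inner_le : forall ub, (P `&` sphere) ub ->
    (forall u, (P `&` sphere) u -> FQ Q ub <= FQ Q u) ->
    forall u, (P `&` sphere) u -> inner_angle Q u <= inner_angle Q ub.
  move=> ub ubPS ubmin u uPSu.
  have [v [vs hv]] := maxu u uPSu.2; have [vh [vhs hvh]] := maxu ub ubPS.2.
  rewrite (inner_eq uPSu.2 vs hv) (inner_eq ubPS.2 vhs hvh).
  have /andP[a1 _] := unit_dot ((sphereE ub).1 ubPS.2) ((sphereE vh).1 vhs.2).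
  have /andP[_ b1] := unit_dot ((sphereE u).1 uPSu.2) ((sphereE v).1 vs.2).
  apply: acos_anti a1 _ b1.
  by rewrite -(FQ_eq vs hv) -(FQ_eq vhs hvh); exact: ubmin.
have ThetaE : forall ub, (P `&` sphere) ub ->
    (forall u, (P `&` sphere) u -> FQ Q ub <= FQ Q u) ->
    Theta P Q = inner_angle Q ub.
  move=> ub ubPS ubmin; apply: sup_max; first by exists ub.
  by move=> _ [u uPSu <-]; exact: inner_le.
split.
  move=> ub hcl; have hub := cluster_coord hcl; have [ubPS [ubmin _]] := key ub hub.
  split; first by split.
  move=> vb hvb.
  have ubu := (sphereE ub).1 ubPS.2.
  have vbmax := proj_max ubu hvb.
  have vbs := hvb.1.
  have inner_ub : inner_angle Q ub = acos (dotv ub vb) := inner_eq ubPS.2 vbs vbmax.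
  split; first by split => //; exact: inner_le.
  split; last by rewrite (ThetaE ub ubPS ubmin) inner_ub.
  split => // v vs.
  have /andP[a1 _] := unit_dot ubu ((sphereE v).1 vs.2).
  have /andP[_ b1] := unit_dot ubu ((sphereE vb).1 vbs.2).
  exact: acos_anti a1 (vbmax v vs) b1.
have [ub hub] := @BW R n 1 uk (fun k => unit_coords (uPS k).2).
have [ubPS [ubmin lower]] := key ub hub.
have [vh [vhs hvh]] := maxu ub ubPS.2.
rewrite (ThetaE ub ubPS ubmin) (inner_eq ubPS.2 vhs hvh) -(FQ_eq vhs hvh).
have hb := unit_dot ((sphereE ub).1 ubPS.2) ((sphereE vh).1 vhs.2).
rewrite acosK; last by rewrite in_itv /= (FQ_eq vhs hvh).
apply/cvgrPdist_lt => eta eta0.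
have eta20 : 0 < eta / 2 by apply: divr_gt0 => //; lra.
have [N hN] := lower (eta / 2) eta20.
exists (maxn N 1) => // k /= hk.
have kN : (N <= k)%N by lia.
case: k hk kN => [|k] hk kN; first by lia.
have h1 := hN _ kN; have h2 := r_le k ub ubPS.
rewrite ger0_norm; last by rewrite subr_ge0.
have he : eta / 2 < eta by lra.
set a := FQ Q ub in h1 h2 *; set b := rk k.+1 in h1 h2 *; set c := eta / 2 in h1 he.
lra.
Qed.
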